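(* (1) If $\iota$ is an involution of odd type with patching element $\gamma$, then $\mathcal H\cap\Omega^+_{\mathbb K_\gamma}\neq\emptyset$. (2) If $\iota$ is an involution of even type with patching element $\gamma$, then $\mathcal H\cap\Omega^+_{\mathbb K_\gamma}=\emptyset$.
   Context: $\Lambda=\mathbb U(2)\oplus\mathbb U\oplus\mathbb E_8(2)$; $\Omega_\Lambda^+$ a fixed component of $\{[\omega]\in\mathbf P(\Lambda\otimes\mathbb C):\omega^2=0,\langle\omega,\bar\omega\rangle>0\}$; for $d\in\Lambda\otimes\mathbb R$, $H_d=\{\omega\in\Omega_\Lambda^+:\langle\omega,d\rangle=0\}$; $\mathcal H=\bigcup_{d\in\Lambda,d^2=-2}H_d$. Setting: $\iota$ is a fixed-point-free involution of $K_{\tau,\tau'}=\mathrm{Km}(E_\tau\times E_{\tau'})$ with $\mathbf K\subset H^2(K_{\tau,\tau'},\mathbb Z)_-$ ($\mathbf K\cong\mathbb U(2)\oplus\mathbb U(2)$ the image of $H^1(E_\tau,\mathbb Z)\otimes H^1(E_{\tau'},\mathbb Z)$), $\alpha$ a marking with $\alpha(H^2_-)=\Lambda$ and period in $\Omega_\Lambda^+$, $\mathbb K_\gamma=\alpha(\mathbf K)$, $\mathbb E_\gamma$ the orthogonal complement of $\mathbb K_\gamma$ in $\Lambda$ ($\cong\mathbb E_8(2)$), and $\Omega^+_{\mathbb K_\gamma}=\{[\omega]\in\Omega^+_\Lambda:\omega\in\mathbb K_\gamma\otimes\mathbb C\}$. Writing $\Lambda=\mathbb Z(d_1+d_2)+\mathbb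 K_\gamma\oplus\mathbb E_\gamma$ with $d_1\in\mathbb K_\gamma^\vee\setminus\mathbb K_\gamma$, $d_2\in\mathbb E_\gamma^\vee\setminus\mathbb E_\gamma$, the patching element is $\gamma=\bar d_1\in A_{\mathbf K}$, and $\iota$ is of odd (resp. even) type if $q_{\mathbf K}(\gamma)=1$ (resp. $0$) in $\mathbb Z/2$. *)

(* Defs.v *)
From HB Require Import structures.
From mathcomp Require Import all_boot all_order all_algebra.
From mathcomp Require Import complex.
Set Implicit Arguments. Unset Strict Implicit. Unset Printing Implicit Defensive.
Import Order.TTheory GRing.Theory Num.Theory.
Local Open Scope ring_scope.

(* Dynkin diagram of E8 (Bourbaki numbering, 0-indexed):
   0-2-3-4-5-6-7 is a chain and 1 is attached to 3. *)
Definition e8edge (i j : nat) : bool :=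
  let e a b := ((i == a) && (j == b)) || ((i == b) && (j == a)) in
  [|| e 0 2, e 2 3, e 3 4, e 4 5, e 5 6, e 6 7 | e 1 3]%N.

(* entries of the negative definite E8 lattice scaled by s : E8(s) *)
Definition e8_entry (s : int) (i j : nat) : int :=
  if i == j then (- 2 * s)%R else if e8edge i j then s else 0.

Definition E8_2 : 'M[int]_8 := \matrix_(i < 8, j < 8) e8_entry 2 i j.

Definition U2U2 : 'M[int]_4 :=
  \matrix_(i < 4, j < 4)
    (let i' := nat_of_ord i in let j' := nat_of_ord j in
     if [|| (i' == 0) && (j' == 1), (i' == 1) && (j' == 0),
        (i' == 2) && (j' == 3) | (i' == 3) && (j' == 2)]%N
     then 2%:Z else 0%:Z).

(* Lambda = U(2) + U + E8(2) on Z^12: coordinates 0,1 : U(2); 2,3 : U;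
   4..11 : E8(2). *)
Definition lam_entry (i j : nat) : int :=
  if ((i == 0%N) && (j == 1%N)) || ((i == 1%N) && (j == 0%N)) then 2
  else if ((i == 2%N) && (j == 3%N)) || ((i == 3%N) && (j == 2%N)) then 1
  else if (4 <= i)%N && (4 <= j)%N then e8_entry 2 (i - 4) (j - 4)
  else 0.

Definition GLam : 'M[int]_12 := \matrix_(i < 12, j < 12) lam_entry i j.

Definition bil {F : comNzRingType} (u v : 'rV[F]_12) : F :=
  (u *m map_mx intr GLam *m v^T) 0 0.

Definition isZ (x : rat) : Prop := exists z : int, x = z%:~R.

(* q (in Q/2Z) equals b mod 2 *)
Definition qmod2 (x : rat) (b : int) : Prop := exists k : int, x = (2 * k + b)%:~R.

Definition ratv {n : nat} (v : 'rV[int]_n) : 'rV[rat]_n := map_mx intr v.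

(* A positive definite real 2-plane spanned by p1 p2; its orientation is used
   to single out one of the two connected components of the period domain. *)
Definition pos_plane {R : rcfType} (p1 p2 : 'rV[R]_12) : Prop :=
  [/\ 0 < bil p1 p1 & 0 < bil p1 p1 * bil p2 p2 - bil p1 p2 ^+ 2].

Definition reV {R : rcfType} (w : 'rV[R[i]]_12) : 'rV[R]_12 := map_mx (fun z : R[i] => complex.Re z) w.
Definition imV {R : rcfType} (w : 'rV[R[i]]_12) : 'rV[R]_12 := map_mx (fun z : R[i] => complex.Im z) w.
Definition conjV {R : rcfType} (w : 'rV[R[i]]_12) : 'rV[R[i]]_12 :=
  map_mx (@conjc R) w.

(* Omega_Lambda^+ : the representative w of [w] satisfies w^2 = 0, <w, conj w> > 0,
   and the oriented positive plane (Re w, Im w) has the same orientation as (p1,p2)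
   (sign of the determinant of pairings).  This condition is invariant under
   w |-> c w, c in C^*, and selects one of the two connected components. *)
Definition OmegaPlus {R : rcfType} (p1 p2 : 'rV[R]_12) (w : 'rV[R[i]]_12) : Prop :=
  [/\ bil w w = 0, 0 < bil w (conjV w) &
  0 < bil (reV w) p1 * bil (imV w) p2 - bil (reV w) p2 * bil (imV w) p1].

Definition onH {R : rcfType} (d : 'rV[int]_12) (w : 'rV[R[i]]_12) : Prop :=
  bil w (map_mx intr d) = 0.

Definition inHcal {R : rcfType} (w : 'rV[R[i]]_12) : Prop :=
  exists d : 'rV[int]_12, [/\ bil d d = - 2 & onH d w].

(* w in K (x) C, where the rows of B form a Z-basis of K *)
Definition inKC {R : rcfType} (B : 'M[int]_(4, 12)) (w : 'rV[R[i]]_12) : Prop :=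
  exists c : 'rV[R[i]]_4, w = c *m map_mx intr B.

Definition K_basis (B : 'M[int]_(4, 12)) : Prop := B *m GLam *m B^T = U2U2.

Definition E_basis_perp (B : 'M[int]_(4, 12)) (C : 'M[int]_(8, 12)) : Prop :=
  [/\ C *m GLam *m C^T = E8_2,
      (forall (i : 'I_4) (j : 'I_8), bil (row i B) (row j C) = 0) &
      (forall v : 'rV[int]_12, (forall i : 'I_4, bil v (row i B) = 0) ->
         exists b : 'rV[int]_8, v = b *m C)].

(* d lies in M^v \ M, where the rows of M (n x 12) are a Z-basis of M *)
Definition in_dual_not_in {n : nat} (M : 'M[int]_(n, 12)) (d : 'rV[rat]_12) : Prop :=
  exists t : 'rV[rat]_n,
    [/\ d = t *m map_mx intr M,
        (forall i : 'I_n, isZ (bil d (ratv (row i M)))) &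
        ~ (forall i : 'I_n, isZ (t 0 i))].

Definition glue_decomp (B : 'M[int]_(4, 12)) (C : 'M[int]_(8, 12))
    (d1 d2 : 'rV[rat]_12) : Prop :=
  [/\ (forall v : 'rV[int]_12, exists (n : int) (a : 'rV[int]_4) (b : 'rV[int]_8),
        ratv v = n%:~R *: (d1 + d2) + ratv a *m map_mx intr B
                 + ratv b *m map_mx intr C) &
      (forall (n : int) (a : 'rV[int]_4) (b : 'rV[int]_8),
        exists v : 'rV[int]_12,
        ratv v = n%:~R *: (d1 + d2) + ratv a *m map_mx intr B
                 + ratv b *m map_mx intr C)].

(* B : a Z-basis of K_gamma = U(2)+U(2), C : a Z-basis of E_gamma = K_gamma^perp
   (= E8(2)), d1 in K^v \ K, d2 in E^v \ E, Lambda = Z(d1+d2) + K (+) E.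
   The patching element is gamma = class of d1 in A_K, and q_K(gamma) = d1^2 mod 2Z. *)
Definition patching_data (B : 'M[int]_(4, 12)) (C : 'M[int]_(8, 12))
    (d1 d2 : 'rV[rat]_12) : Prop :=
  [/\ K_basis B, E_basis_perp B C, in_dual_not_in B d1, in_dual_not_in C d2 &
      glue_decomp B C d1 d2].

(* Main.v *)
Require Import Defs.
From HB Require Import structures.
From mathcomp Require Import all_boot all_order all_algebra.
From mathcomp Require Import complex.
From mathcomp Require Import ring lra zify.
Set Implicit Arguments. Unset Strict Implicit. Unset Printing Implicit Defensive.
Import Order.TTheory GRing.Theory Num.Theory.
Local Open Scope ring_scope.
Definition cc {F : Type} {n : nat} (x : 'rV[F]_n.+1) (k : nat) : F := x 0 (inord k).

Lemma sum_inord (V : nmodType) n (f : 'I_n.+1 -> V) :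
  \sum_i f i = \sum_(0 <= k < n.+1) f (inord k).
Proof. by rewrite big_mkord; apply: eq_bigr => i _; rewrite inord_val. Qed.

Lemma form_sum (F : comNzRingType) n (M : 'M[F]_n.+1) (x y : 'rV[F]_n.+1) :
  (x *m M *m y^T) 0 0 = \sum_(0 <= i < n.+1) \sum_(0 <= j < n.+1) cc x i * M (inord i) (inord j) * cc y j.
Proof.
rewrite !mxE.
under eq_bigr do rewrite !mxE mulr_suml.
rewrite exchange_big /= sum_inord; apply: eq_big_nat => i /andP[_ hi].
rewrite sum_inord; apply: eq_big_nat => j /andP[_ hj].
by [].
Qed.

Lemma bil_sum (F : comNzRingType) (u v : 'rV[F]_12) :
  bil u v = \sum_i \sum_j u 0 i * (GLam i j)%:~R * v 0 j.
Proof.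
rewrite /bil !mxE.
under eq_bigr do rewrite !mxE mulr_suml.
rewrite exchange_big /=; apply: eq_bigr => i _; apply: eq_bigr => j _.
by rewrite !mxE.
Qed.

Definition e8F {F : pzRingType} (i j : nat) : F :=
  if i == j then -4 else if e8edge i j then 2 else 0.
Definition lamF {F : pzRingType} (i j : nat) : F :=
  if ((i == 0%N) && (j == 1%N)) || ((i == 1%N) && (j == 0%N)) then 2
  else if ((i == 2%N) && (j == 3%N)) || ((i == 3%N) && (j == 2%N)) then 1
  else if (4 <= i)%N && (4 <= j)%N then e8F (i - 4) (j - 4)
  else 0.

Lemma e8E (F : pzRingType) i j : (e8_entry 2 i j)%:~R = e8F i j :> F.
Proof.
rewrite /e8_entry /e8F.
case: ifP => _; first by rewrite intrM mulrNz mulNr (_ : 2%:~R = 2%:R :> F); [rewrite -natrM | exact: erefl].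
by case: ifP => _; exact: erefl.
Qed.

Lemma lamE (F : pzRingType) i j : (lam_entry i j)%:~R = lamF i j :> F.
Proof.
rewrite /lam_entry /lamF.
case: ifP => _; first exact: erefl.
case: ifP => _; first exact: erefl.
case: ifP => _; last exact: erefl.
exact: e8E.
Qed.

Lemma bil_cc (F : comNzRingType) (u v : 'rV[F]_12) :
  bil u v = \sum_(0 <= i < 12) \sum_(0 <= j < 12) cc u i * lamF i j * cc v j.
Proof.
rewrite bil_sum sum_inord; apply: eq_big_nat => i /andP[_ hi].
rewrite sum_inord; apply: eq_big_nat => j /andP[_ hj].
by rewrite mxE lamE !inordK.
Qed.

Definition qE8f {F : pzRingType} (x : nat -> F) : F :=
  x 0%N * x 0%N + x 1%N * x 1%N + x 2%N * x 2%N + x 3%N * x 3%N + x 4%N * x 4%N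
  + x 5%N * x 5%N + x 6%N * x 6%N + x 7%N * x 7%N
  - (x 0%N * x 2%N + x 2%N * x 3%N + x 3%N * x 4%N + x 4%N * x 5%N + x 5%N * x 6%N
     + x 6%N * x 7%N + x 1%N * x 3%N).

Lemma bilQ (F : comNzRingType) (u : 'rV[F]_12) :
  bil u u = 4 * (cc u 0 * cc u 1) + 2 * (cc u 2 * cc u 3)
     - 4 * qE8f (fun k => cc u (k + 4)).
Proof.
rewrite bil_cc !big_nat_recr //= !big_nil.
rewrite /lamF /e8F /qE8f /=.
ring.
Qed.

Definition u2F {F : pzRingType} (i j : nat) : F :=
  if [|| (i == 0) && (j == 1), (i == 1) && (j == 0),
        (i == 2) && (j == 3) | (i == 3) && (j == 2)]%N then 2 else 0.

Definition b4 {F : pzRingType} (x y : nat -> F) : F :=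
  x 0%N * y 1%N + x 1%N * y 0%N + x 2%N * y 3%N + x 3%N * y 2%N.

Lemma U2form (F : comNzRingType) (x y : 'rV[F]_4) :
  (x *m map_mx intr U2U2 *m y^T) 0 0 = 2 * b4 (cc x) (cc y).
Proof.
rewrite form_sum.
have E : forall i j, (i < 4)%N -> (j < 4)%N ->
   map_mx intr U2U2 (inord i) (inord j) = u2F i j :> F.
  move=> i j hi hj; rewrite !mxE !inordK // /u2F.
  by case: ifP => _; exact: erefl.
rewrite !big_nat_recr //= !big_nil !E //.
rewrite /u2F /b4 /=.
ring.
Qed.

Lemma E8form (F : comNzRingType) (x : 'rV[F]_8) :
  (x *m map_mx intr E8_2 *m x^T) 0 0 = - 4 * qE8f (cc x).
Proof.
rewrite form_sum.
have E : forall i j, (i < 8)%N -> (j < 8)%N ->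
   map_mx intr E8_2 (inord i) (inord j) = e8F i j :> F.
  by move=> i j hi hj; rewrite !mxE !inordK // e8E.
rewrite !big_nat_recr //= !big_nil !E //.
rewrite /e8F /qE8f /=.
ring.
Qed.

Lemma e8edge_sym a b : e8edge a b = e8edge b a.
Proof.
by case: a => [|[|[|[|[|[|[|[|a]]]]]]]]; case: b => [|[|[|[|[|[|[|[|b]]]]]]]].
Qed.

Lemma lam_sym i j : lam_entry i j = lam_entry j i.
Proof.
have S2 : forall a b : nat, ((i == a) && (j == b)) || ((i == b) && (j == a))
                   = ((j == a) && (i == b)) || ((j == b) && (i == a)).
  by move=> a b; rewrite orbC !(andbC (i == _)).
rewrite /lam_entry /e8_entry (e8edge_sym (i - 4)) (eq_sym (i - 4)%N (j - 4)%N).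
by rewrite (andbC (4 <= i)%N) (S2 0%N 1%N) (S2 2%N 3%N).
Qed.

Lemma GLam_sym : GLam^T = GLam.
Proof. by apply/matrixP => i j; rewrite !mxE lam_sym. Qed.


Lemma bilDl (F : comNzRingType) (u1 u2 v : 'rV[F]_12) : bil (u1 + u2) v = bil u1 v + bil u2 v.
Proof. by rewrite /bil !mulmxDl mxE. Qed.
Lemma bilZl (F : comNzRingType) (a : F) (u v : 'rV[F]_12) : bil (a *: u) v = a * bil u v.
Proof. by rewrite /bil -!scalemxAl mxE. Qed.
Lemma bilC (F : comNzRingType) (u v : 'rV[F]_12) : bil u v = bil v u.
Proof.
rewrite /bil.
have -> : (u *m map_mx intr GLam *m v^T) 0 0 = ((u *m map_mx intr GLam *m v^T)^T) 0 0
  by rewrite [RHS]mxE.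
by rewrite !trmx_mul trmxK map_trmx GLam_sym mulmxA.
Qed.
Lemma bilDr (F : comNzRingType) (u v1 v2 : 'rV[F]_12) : bil u (v1 + v2) = bil u v1 + bil u v2.
Proof. by rewrite bilC bilDl !(bilC u). Qed.
Lemma bilZr (F : comNzRingType) (a : F) (u v : 'rV[F]_12) : bil u (a *: v) = a * bil u v.
Proof. by rewrite bilC bilZl bilC. Qed.
Lemma bilNl (F : comNzRingType) (u v : 'rV[F]_12) : bil (- u) v = - bil u v.
Proof. by rewrite -scaleN1r bilZl mulN1r. Qed.
Lemma bilNr (F : comNzRingType) (u v : 'rV[F]_12) : bil u (- v) = - bil u v.
Proof. by rewrite -scaleN1r bilZr mulN1r. Qed.
Lemma bil0r (F : comNzRingType) (u : 'rV[F]_12) : bil u 0 = 0.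
Proof. by rewrite /bil trmx0 mulmx0 mxE. Qed.
Lemma bil0l (F : comNzRingType) (u : 'rV[F]_12) : bil 0 u = 0.
Proof. by rewrite bilC bil0r. Qed.

Lemma bil_gram (F : comNzRingType) m n (M : 'M[int]_(m,12)) (N : 'M[int]_(n,12)) (x : 'rV[F]_m) (y : 'rV[F]_n) :
  bil (x *m map_mx intr M) (y *m map_mx intr N) = (x *m map_mx intr (M *m GLam *m N^T) *m y^T) 0 0.
Proof. by rewrite /bil !map_mxM -map_trmx trmx_mul !mulmxA. Qed.

Lemma bil_map (F1 F2 : comNzRingType) (f : {rmorphism F1 -> F2}) (u v : 'rV[F1]_12) :
  bil (map_mx f u) (map_mx f v) = f (bil u v).
Proof.
rewrite !bil_sum rmorph_sum; apply: eq_bigr => i _.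
rewrite rmorph_sum; apply: eq_bigr => j _.
by rewrite !mxE !rmorphM rmorph_int.
Qed.

Lemma ratv_inj n : injective (@ratv n).
Proof.
move=> u v /matrixP h; apply/matrixP => i j; move: (h i j); rewrite !mxE.
exact: intr_inj.
Qed.

Lemma map_delta (F : pzRingType) n (i : 'I_n) :
  map_mx intr ('e_i : 'rV[int]_n) = ('e_i : 'rV[F]_n).
Proof. by apply/matrixP => a b; rewrite !mxE; case: (_ && _); exact: erefl. Qed.

Lemma bil_row (F : comNzRingType) m n (M : 'M[int]_(m,12)) (N : 'M[int]_(n,12))
   (t : 'rV[F]_m) (i : 'I_n) :
  bil (t *m map_mx intr M) (map_mx intr (row i N)) = (t *m map_mx intr (M *m GLam *m N^T)) 0 i.
Proof.
rewrite rowE map_mxM map_delta bil_gram trmx_delta -colE.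
by rewrite !mxE.
Qed.

Lemma entry_bil m n (M : 'M[int]_(m,12)) (N : 'M[int]_(n,12)) i j :
  (M *m GLam *m N^T) i j = bil (row i M) (row j N).
Proof.
rewrite /bil.
have -> : map_mx intr GLam = GLam by apply/matrixP => a b; rewrite mxE intz.
rewrite -row_mul tr_row colE mulmxA -colE -row_mul.
by rewrite [RHS]mxE [RHS]mxE.
Qed.

Lemma dual_int n (M Minv : 'M[int]_n) (c : int) (t : 'rV[rat]_n) :
  M *m Minv = c%:M -> (forall i, isZ ((t *m map_mx intr M) 0 i)) ->
  exists y : 'rV[int]_n, c%:~R *: t = ratv y.
Proof.
move=> hM hZ.
have [yz hyz] := fin_all_exists hZ.
exists (\row_i yz i *m Minv).
have hT : t *m map_mx intr M = map_mx intr (\row_i yz i).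
  by apply/matrixP => a b; rewrite (ord1 a) hyz !mxE.
rewrite /ratv map_mxM -hT -mulmxA -map_mxM hM map_scalar_mx /=.
by rewrite mul_mx_scalar.
Qed.

Definition P2 : 'M[int]_4 :=
  \matrix_(i < 4, j < 4)
    (let i' := nat_of_ord i in let j' := nat_of_ord j in
     if [|| (i' == 0) && (j' == 1), (i' == 1) && (j' == 0),
        (i' == 2) && (j' == 3) | (i' == 3) && (j' == 2)]%N
     then 1%:Z else 0%:Z).

Lemma U2P2 : U2U2 *m P2 = 2%:M.
Proof.
apply/matrixP => i j; rewrite !mxE sum_inord !big_nat_recr //= big_nil !mxE !inordK //.
by case: i => [[|[|[|[|i]]]] hi] //; case: j => [[|[|[|[|j]]]] hj].
Qed.

Definition ainvl : seq (seq int) :=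
 [:: [:: 4; 5; 7; 10; 8; 6; 4; 2]; [:: 5; 8; 10; 15; 12; 9; 6; 3];
     [:: 7; 10; 14; 20; 16; 12; 8; 4]; [:: 10; 15; 20; 30; 24; 18; 12; 6];
     [:: 8; 12; 16; 24; 20; 15; 10; 5]; [:: 6; 9; 12; 18; 15; 12; 8; 4];
     [:: 4; 6; 8; 12; 10; 8; 6; 3]; [:: 2; 3; 4; 6; 5; 4; 3; 2]].
Definition Ainv : 'M[int]_8 := \matrix_(i < 8, j < 8) nth 0 (nth [::] ainvl i) j.

Lemma E8Ainv : E8_2 *m Ainv = (-2)%:M.
Proof.
apply/matrixP => i j; rewrite !mxE sum_inord !big_nat_recr //= big_nil !mxE !inordK //.
by case: i => [[|[|[|[|[|[|[|[|i]]]]]]]] hi] //; case: j => [[|[|[|[|[|[|[|[|j]]]]]]]] hj].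
Qed.

Lemma BC0 (B : 'M[int]_(4,12)) (C : 'M[int]_(8,12)) :
  E_basis_perp B C -> B *m GLam *m C^T = 0.
Proof. by case=> _ h _; apply/matrixP => i j; rewrite entry_bil mxE h. Qed.

Lemma formBB (F : comNzRingType) (B : 'M[int]_(4,12)) (x y : 'rV[F]_4) :
  K_basis B -> bil (x *m map_mx intr B) (y *m map_mx intr B) = 2 * b4 (cc x) (cc y).
Proof. by move=> hK; rewrite bil_gram hK U2form. Qed.

Lemma formBC (F : comNzRingType) (B : 'M[int]_(4,12)) (C : 'M[int]_(8,12)) (x : 'rV[F]_4) (y : 'rV[F]_8) :
  E_basis_perp B C -> bil (x *m map_mx intr B) (y *m map_mx intr C) = 0.
Proof. by move=> hE; rewrite bil_gram (BC0 hE) map_mx0 mulmx0 mul0mx mxE. Qed.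

Lemma formCC (F : comNzRingType) (B : 'M[int]_(4,12)) (C : 'M[int]_(8,12)) (y : 'rV[F]_8) :
  E_basis_perp B C -> bil (y *m map_mx intr C) (y *m map_mx intr C) = - 4 * qE8f (cc y).
Proof. by case=> h _ _; rewrite bil_gram h E8form. Qed.

Lemma intr2 (F : pzRingType) : (2 : int)%:~R = 2 :> F.
Proof. exact: erefl. Qed.

Definition evz (z : int) : bool := (2 %| z)%Z.

Lemma not_all_int n (s : 'rV[int]_n) (t : 'rV[rat]_n) :
  ratv s = 2 *: t -> ~ (forall i, isZ (t 0 i)) -> exists k, ~~ evz (s 0 k).
Proof.
move=> hs hn; case: (boolP [exists k, ~~ evz (s 0 k)]) => [/existsP[k hk]|h].
  by exists k.
exfalso; apply: hn => i.
have /dvdzP[q hq] : evz (s 0 i) by move/existsPn: h => /(_ i); rewrite negbK.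
exists q.
have := congr1 (fun M : 'rV[rat]_n => M 0 i) hs; rewrite /= !mxE hq intrM.
rewrite intr2 mulrC => e; apply: (@mulfI _ 2) => //; by rewrite -e.
Qed.

Lemma K_dual (B : 'M[int]_(4,12)) (d1 : 'rV[rat]_12) :
  K_basis B -> in_dual_not_in B d1 ->
  exists (s : 'rV[int]_4) (t : 'rV[rat]_4),
    [/\ d1 = t *m map_mx intr B, ratv s = 2 *: t & exists k, ~~ evz (s 0 k)].
Proof.
move=> hK [t [d1E hZ hn]].
have hZ' : forall i, isZ ((t *m map_mx intr U2U2) 0 i).
  by move=> i; rewrite -hK -bil_row -d1E; exact: hZ.
have [y hy] := dual_int U2P2 hZ'.
exists y, t; split; [exact: d1E | by rewrite -hy intr2 | ].
by apply: (not_all_int _ hn); rewrite -hy intr2.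
Qed.

Lemma E_dual (B : 'M[int]_(4,12)) (C : 'M[int]_(8,12)) (d2 : 'rV[rat]_12) :
  E_basis_perp B C -> in_dual_not_in C d2 ->
  exists (r : 'rV[int]_8) (t : 'rV[rat]_8),
    [/\ d2 = t *m map_mx intr C, ratv r = 2 *: t & exists k, ~~ evz (r 0 k)].
Proof.
move=> hE [t [d2E hZ hn]].
have hZ' : forall i, isZ ((t *m map_mx intr E8_2) 0 i).
  by move=> i; case: hE => <- _ _; rewrite -bil_row -d2E; exact: hZ.
have [y hy] := dual_int E8Ainv hZ'.
have hr : ratv (- y) = 2 *: t.
  by rewrite /ratv map_mxN -/(ratv y) -hy scaleNr opprK.
exists (- y), t; split; [exact: d2E | exact: hr | ].
by apply: (not_all_int _ hn); rewrite hr.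
Qed.

Lemma ratvZ n (c : int) (v : 'rV[int]_n) : ratv (c *: v) = c%:~R *: ratv v.
Proof. by apply/matrixP => i j; rewrite !mxE intrM. Qed.
Lemma ratvD n (u v : 'rV[int]_n) : ratv (u + v) = ratv u + ratv v.
Proof. by apply/matrixP => i j; rewrite !mxE intrD. Qed.
Lemma ratvM m (u : 'rV[int]_m) (M : 'M[int]_(m,12)) : ratv (u *m M) = ratv u *m map_mx intr M.
Proof. by rewrite /ratv map_mxM. Qed.

Lemma two_glue (B : 'M[int]_(4,12)) (C : 'M[int]_(8,12)) (d1 d2 : 'rV[rat]_12)
   (s : 'rV[int]_4) (t1 : 'rV[rat]_4) (r : 'rV[int]_8) (t2 : 'rV[rat]_8)
   (n : int) (a : 'rV[int]_4) (b : 'rV[int]_8) (v : 'rV[int]_12) :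
  d1 = t1 *m map_mx intr B -> ratv s = 2 *: t1 ->
  d2 = t2 *m map_mx intr C -> ratv r = 2 *: t2 ->
  ratv v = n%:~R *: (d1 + d2) + ratv a *m map_mx intr B + ratv b *m map_mx intr C ->
  2 *: v = (n *: s + 2 *: a) *m B + (n *: r + 2 *: b) *m C.
Proof.
move=> d1E hs d2E hr hv; apply: ratv_inj.
rewrite ratvZ hv !ratvD !ratvM !ratvD !ratvZ hs hr d1E d2E intr2.
rewrite !mulmxDl -!scalemxAl !scalerDr !scalerA (mulrC 2 n%:~R).
by rewrite -!addrA; congr (_ + _); rewrite addrCA.
Qed.

Lemma qE8_sos (F : comNzRingType) (x : nat -> F) :
  120 * qE8f x = 30 * (2 * x 0%N - x 2%N) ^+ 2 + 30 * (2 * x 1%N - x 3%N) ^+ 2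
   + 10 * (3 * x 2%N - 2 * x 3%N) ^+ 2 + 2 * (5 * x 3%N - 6 * x 4%N) ^+ 2
   + 3 * (4 * x 4%N - 5 * x 5%N) ^+ 2 + 5 * (3 * x 5%N - 4 * x 6%N) ^+ 2
   + 10 * (2 * x 6%N - 3 * x 7%N) ^+ 2 + 30 * x 7%N ^+ 2.
Proof. rewrite /qE8f; ring. Qed.

Lemma qE8_ge0 (R : realDomainType) (x : nat -> R) : 0 <= qE8f x.
Proof.
have h := qE8_sos x.
have : 0 <= 120 * qE8f x by rewrite h; repeat apply: addr_ge0; apply: mulr_ge0 => //; exact: sqr_ge0.
by rewrite pmulr_rge0.
Qed.

Lemma sq0 (R : realDomainType) (x : R) : x ^+ 2 <= 0 -> x = 0.
Proof. by move=> h; apply/eqP; rewrite -sqrf_eq0 eq_le h sqr_ge0. Qed.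

Lemma K4 (R : realFieldType) (x0 x1 x2 x3 y0 y1 y2 y3 k0 k1 k2 k3 : R) :
  x0 * x1 + x2 * x3 = y0 * y1 + y2 * y3 ->
  x0 * y1 + x1 * y0 + x2 * y3 + x3 * y2 = 0 ->
  0 < x0 * x1 + x2 * x3 ->
  x0 * k1 + x1 * k0 + x2 * k3 + x3 * k2 = 0 ->
  y0 * k1 + y1 * k0 + y2 * k3 + y3 * k2 = 0 ->
  0 <= k0 * k1 + k2 * k3 ->
  [/\ k0 = 0, k1 = 0, k2 = 0 & k3 = 0].
Proof.
move=> hxx hxy hpos hxk hyk hk.
set X1 := x0 + x1; set X2 := x2 + x3; set Y1 := y0 + y1; set Y2 := y2 + y3.
set K1 := k0 + k1; set K2 := k2 + k3.
set c := X1 * Y2 - X2 * Y1.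
have hc : c != 0.
  apply/negP => /eqP c0.
  have E1 : 2 * (Y1 ^+ 2 * (2 * (x0 * x1 + x2 * x3))
       - 2 * X1 * Y1 * (x0 * y1 + x1 * y0 + x2 * y3 + x3 * y2)
       + X1 ^+ 2 * (2 * (y0 * y1 + y2 * y3))) = c ^+ 2
     - (Y1 * (x0 - x1) - X1 * (y0 - y1)) ^+ 2 - (Y1 * (x2 - x3) - X1 * (y2 - y3)) ^+ 2.
    rewrite /c /X1 /X2 /Y1 /Y2; ring.
  have E2 : 2 * (Y2 ^+ 2 * (2 * (x0 * x1 + x2 * x3))
       - 2 * X2 * Y2 * (x0 * y1 + x1 * y0 + x2 * y3 + x3 * y2)
       + X2 ^+ 2 * (2 * (y0 * y1 + y2 * y3))) = c ^+ 2
     - (Y2 * (x0 - x1) - X2 * (y0 - y1)) ^+ 2 - (Y2 * (x2 - x3) - X2 * (y2 - y3)) ^+ 2.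
    rewrite /c /X1 /X2 /Y1 /Y2; ring.
  have E3 : 4 * (x0 * x1 + x2 * x3) = X1 ^+ 2 + X2 ^+ 2 - (x0 - x1) ^+ 2 - (x2 - x3) ^+ 2.
    rewrite /X1 /X2; ring.
  rewrite hxy -hxx c0 in E1 E2.
  have hX1 : X1 = 0.
    apply: sq0; have h1 : 0 <= (Y1 * (x0 - x1) - X1 * (y0 - y1)) ^+ 2 by exact: sqr_ge0.
    have h2 : 0 <= (Y1 * (x2 - x3) - X1 * (y2 - y3)) ^+ 2 by exact: sqr_ge0.
    have h3 : 0 <= Y1 ^+ 2 by exact: sqr_ge0.
    nra.
  have hX2 : X2 = 0.
    apply: sq0; have h1 : 0 <= (Y2 * (x0 - x1) - X2 * (y0 - y1)) ^+ 2 by exact: sqr_ge0.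
    have h2 : 0 <= (Y2 * (x2 - x3) - X2 * (y2 - y3)) ^+ 2 by exact: sqr_ge0.
    have h3 : 0 <= Y2 ^+ 2 by exact: sqr_ge0.
    nra.
  rewrite hX1 hX2 in E3.
  have h1 : 0 <= (x0 - x1) ^+ 2 by exact: sqr_ge0.
  have h2 : 0 <= (x2 - x3) ^+ 2 by exact: sqr_ge0.
  nra.
set a := Y1 * K2 - Y2 * K1; set b := K1 * X2 - K2 * X1.
set n1 := a * (x0 - x1) + b * (y0 - y1) + c * (k0 - k1).
set n2 := a * (x2 - x3) + b * (y2 - y3) + c * (k2 - k3).
have E : 2 * (a ^+ 2 * (2 * (x0 * x1 + x2 * x3)) + b ^+ 2 * (2 * (y0 * y1 + y2 * y3))
       + c ^+ 2 * (2 * (k0 * k1 + k2 * k3))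
       + 2 * a * b * (x0 * y1 + x1 * y0 + x2 * y3 + x3 * y2)
       + 2 * a * c * (x0 * k1 + x1 * k0 + x2 * k3 + x3 * k2)
       + 2 * b * c * (y0 * k1 + y1 * k0 + y2 * k3 + y3 * k2))
   = - (n1 ^+ 2 + n2 ^+ 2).
  rewrite /n1 /n2 /a /b /c /X1 /X2 /Y1 /Y2 /K1 /K2; ring.
rewrite hxy hxk hyk -hxx in E.
have ha2 : 0 <= a ^+ 2 by exact: sqr_ge0.
have hb2 : 0 <= b ^+ 2 by exact: sqr_ge0.
have hc2 : 0 <= c ^+ 2 by exact: sqr_ge0.
have hn1 : 0 <= n1 ^+ 2 by exact: sqr_ge0.
have hn2 : 0 <= n2 ^+ 2 by exact: sqr_ge0.
have hck : 0 <= c ^+ 2 * (k0 * k1 + k2 * k3) by exact: mulr_ge0.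
have ha : a = 0 by apply: sq0; nra.
have hb : b = 0 by apply: sq0; nra.
have hN1 : n1 = 0 by apply: sq0; nra.
have hN2 : n2 = 0 by apply: sq0; nra.
have eK1 : c * K1 = - (a * X1 + b * Y1) by rewrite /a /b /c; ring.
have eK2 : c * K2 = - (a * X2 + b * Y2) by rewrite /a /b /c; ring.
rewrite ha hb !mul0r addr0 oppr0 in eK1 eK2.
move: hN1 hN2; rewrite /n1 /n2 ha hb !mul0r !add0r => hN1 hN2.
move/eqP: eK1; rewrite mulf_eq0 (negbTE hc) /= /K1 => /eqP e1.
move/eqP: eK2; rewrite mulf_eq0 (negbTE hc) /= /K2 => /eqP e2.
move/eqP: hN1; rewrite mulf_eq0 (negbTE hc) /= => /eqP e3.
move/eqP: hN2; rewrite mulf_eq0 (negbTE hc) /= => /eqP e4.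
split; lra.
Qed.

(* ---------- signature (2,10): no positive definite 3-space ---------- *)
Lemma bil_comb3 (F : comNzRingType) (a b c : F) (u1 u2 u3 : 'rV[F]_12) :
  bil (a *: u1 + b *: u2 + c *: u3) (a *: u1 + b *: u2 + c *: u3)
  = a * a * bil u1 u1 + b * b * bil u2 u2 + c * c * bil u3 u3
    + 2 * a * b * bil u1 u2 + 2 * a * c * bil u1 u3 + 2 * b * c * bil u2 u3.
Proof.
rewrite !bilDl !bilDr !bilZl !bilZr (bilC u2 u1) (bilC u3 u1) (bilC u3 u2).
ring.
Qed.

Definition fpos {F : pzRingType} (u : 'rV[F]_12) := cc u 0 + cc u 1.
Definition gpos {F : pzRingType} (u : 'rV[F]_12) := cc u 2 + cc u 3.

Lemma fpos_comb (F : comNzRingType) (a b c : F) (u1 u2 u3 : 'rV[F]_12) :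
  fpos (a *: u1 + b *: u2 + c *: u3) = a * fpos u1 + b * fpos u2 + c * fpos u3.
Proof. rewrite /fpos /cc !mxE; ring. Qed.
Lemma gpos_comb (F : comNzRingType) (a b c : F) (u1 u2 u3 : 'rV[F]_12) :
  gpos (a *: u1 + b *: u2 + c *: u3) = a * gpos u1 + b * gpos u2 + c * gpos u3.
Proof. rewrite /gpos /cc !mxE; ring. Qed.

Lemma negQ (R : realFieldType) (z : 'rV[R]_12) : fpos z = 0 -> gpos z = 0 -> bil z z <= 0.
Proof.
rewrite /fpos /gpos bilQ => h1 h2.
have hq := qE8_ge0 (fun k => cc z (k + 4)).
have e1 : cc z 1 = - cc z 0 by lra.
have e2 : cc z 3 = - cc z 2 by lra.
rewrite e1 e2.
have s1 : 0 <= cc z 0 ^+ 2 by exact: sqr_ge0.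
have s2 : 0 <= cc z 2 ^+ 2 by exact: sqr_ge0.
nra.
Qed.

Lemma posdef2 (R : realFieldType) (A B C a b : R) :
  0 < A -> 0 < A * C - B ^+ 2 -> 0 <= a * a * A + b * b * C + 2 * a * b * B.
Proof.
move=> hA hD.
have e : A * (a * a * A + b * b * C + 2 * a * b * B) = (a * A + b * B) ^+ 2 + b ^+ 2 * (A * C - B ^+ 2) by ring.
have s1 : 0 <= (a * A + b * B) ^+ 2 by exact: sqr_ge0.
have s2 : 0 <= b ^+ 2 by exact: sqr_ge0.
nra.
Qed.

Lemma posdef2_0 (R : realFieldType) (A B C a b : R) :
  0 < A -> 0 < A * C - B ^+ 2 -> a * a * A + b * b * C + 2 * a * b * B <= 0 -> a = 0 /\ b = 0.
Proof.
move=> hA hD h.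
have e : A * (a * a * A + b * b * C + 2 * a * b * B) = (a * A + b * B) ^+ 2 + b ^+ 2 * (A * C - B ^+ 2) by ring.
have s1 : 0 <= (a * A + b * B) ^+ 2 by exact: sqr_ge0.
have s2 : 0 <= b ^+ 2 by exact: sqr_ge0.
have hb : b = 0 by apply: sq0; nra.
rewrite hb in h e; split => //.
have : a * a * A <= 0 by move: h; rewrite !(mul0r, mulr0, addr0).
move=> h'; apply: sq0; nra.
Qed.

Lemma noPos3 (R : realFieldType) (p1 p2 V : 'rV[R]_12) :
  0 < bil p1 p1 -> 0 < bil p1 p1 * bil p2 p2 - bil p1 p2 ^+ 2 ->
  bil p1 V = 0 -> bil p2 V = 0 -> 0 < bil V V -> False.
Proof.
move=> hA hD h1 h2 hV.
set A := bil p1 p1 in hA hD; set Bc := bil p1 p2 in hD; set Cc := bil p2 p2 in hD.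
set f1 := fpos p1; set f2 := fpos p2; set f3 := fpos V.
set g1 := gpos p1; set g2 := gpos p2; set g3 := gpos V.
have hneg : forall a b c : R, a * f1 + b * f2 + c * f3 = 0 -> a * g1 + b * g2 + c * g3 = 0 ->
    a * a * A + b * b * Cc + 2 * a * b * Bc + c * c * bil V V <= 0.
  move=> a b c hf hg.
  have := negQ (z := a *: p1 + b *: p2 + c *: V).
  rewrite fpos_comb gpos_comb bil_comb3 h1 h2 => /(_ hf hg).
  by rewrite /A /Cc /Bc (_ : a * a * bil p1 p1 + b * b * bil p2 p2 + c * c * bil V V +
     2 * a * b * bil p1 p2 + 2 * a * c * 0 + 2 * b * c * 0 =
     a * a * bil p1 p1 + b * b * bil p2 p2 + 2 * a * b * bil p1 p2 + c * c * bil V V); last ring.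
have hc : f1 * g2 - f2 * g1 != 0.
  apply/negP => /eqP d0.
  have [hf2 hf1] : f2 = 0 /\ - f1 = 0.
    apply: (posdef2_0 hA hD).
    have := hneg f2 (- f1) 0.
    rewrite (_ : f2 * f1 + - f1 * f2 + 0 * f3 = 0); last ring.
    rewrite (_ : f2 * g1 + - f1 * g2 + 0 * g3 = - (f1 * g2 - f2 * g1)); last ring.
    rewrite d0 oppr0 => /(_ erefl erefl).
    by rewrite !mul0r addr0.
  have [hg2 hg1] : g2 = 0 /\ - g1 = 0.
    apply: (posdef2_0 hA hD).
    have := hneg g2 (- g1) 0.
    rewrite (_ : g2 * f1 + - g1 * f2 + 0 * f3 = f1 * g2 - f2 * g1); last ring.
    rewrite (_ : g2 * g1 + - g1 * g2 + 0 * g3 = 0); last ring.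
    rewrite d0 => /(_ erefl erefl).
    by rewrite !mul0r addr0.
  have := hneg 1 0 0.
  rewrite (_ : 1 * f1 + 0 * f2 + 0 * f3 = - - f1); last ring.
  rewrite (_ : 1 * g1 + 0 * g2 + 0 * g3 = - - g1); last ring.
  rewrite hf1 hg1 oppr0 => /(_ erefl erefl).
  rewrite !(mul0r, mulr0, mul1r, addr0) => hA'.
  by move: (lt_le_trans hA hA'); rewrite ltxx.
set c := f1 * g2 - f2 * g1.
have := hneg (f2 * g3 - f3 * g2) (f3 * g1 - f1 * g3) c.
rewrite (_ : (f2 * g3 - f3 * g2) * f1 + (f3 * g1 - f1 * g3) * f2 + c * f3 = 0); last by rewrite /c; ring.
rewrite (_ : (f2 * g3 - f3 * g2) * g1 + (f3 * g1 - f1 * g3) * g2 + c * g3 = 0); last by rewrite /c; ring.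
move=> /(_ erefl erefl) hle.
have h0 := posdef2 (f2 * g3 - f3 * g2) (f3 * g1 - f1 * g3) hA hD.
have hcc : 0 < c * c by rewrite -expr2 lt_def sqrf_eq0 hc sqr_ge0.
have : 0 < c * c * bil V V by exact: mulr_gt0.
move=> h; have := lt_le_trans (ltr_wpDl h0 h) hle.
by rewrite ltxx.
Qed.

Lemma orient_nz (R : realFieldType) (p1 p2 X Y : 'rV[R]_12) :
  0 < bil p1 p1 -> 0 < bil p1 p1 * bil p2 p2 - bil p1 p2 ^+ 2 ->
  bil X X = bil Y Y -> 0 < bil X X -> bil X Y = 0 ->
  bil X p1 * bil Y p2 - bil X p2 * bil Y p1 != 0.
Proof.
move=> hA hD hXY hX hO; apply/negP => /eqP D0.
set x1 := bil X p1 in D0; set x2 := bil X p2 in D0.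
set y1 := bil Y p1 in D0; set y2 := bil Y p2 in D0.
set al := bil X X in hX hXY.
have hV : forall a b : R, a * x1 + b * y1 = 0 -> a * x2 + b * y2 = 0 -> (a * a + b * b) * al <= 0.
  move=> a b e1 e2; rewrite leNgt; apply/negP => hpos.
  apply: (noPos3 hA hD (V := a *: X + b *: Y + 0 *: X)).
  - by rewrite bilC !bilDl !bilZl -/x1 -/y1 mul0r addr0.
  - by rewrite bilC !bilDl !bilZl -/x2 -/y2 mul0r addr0.
  - rewrite bil_comb3 hO -hXY -/al (bilC Y X) hO; move: hpos.
    by rewrite (_ : (a * a + b * b) * al = a * a * al + b * b * al + 0 * 0 * al + 2 * a * b * 0 + 2 * a * 0 * al + 2 * b * 0 * 0); last ring.
have s1 : forall u : R, 0 <= u * u by move=> u; rewrite -expr2 sqr_ge0.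
have [hx1 hy1] : x1 = 0 /\ y1 = 0.
  have := hV y1 (- x1); rewrite (_ : y1 * x1 + - x1 * y1 = 0); last ring.
  rewrite (_ : y1 * x2 + - x1 * y2 = - (x1 * y2 - x2 * y1)); last ring.
  rewrite D0 oppr0 => /(_ erefl erefl) h.
  have := s1 y1; have := s1 x1 => hx hy.
  split; apply: sq0; nra.
have [hx2 hy2] : x2 = 0 /\ y2 = 0.
  have := hV y2 (- x2); rewrite hx1 hy1 (_ : y2 * 0 + - x2 * 0 = 0); last ring.
  rewrite (_ : y2 * x2 + - x2 * y2 = 0); last ring.
  move=> /(_ erefl erefl) h.
  have := s1 y2; have := s1 x2 => hx hy.
  split; apply: sq0; nra.
have := hV 1 0; rewrite hx1 hx2 !(mulr0, mul0r, addr0) => /(_ erefl erefl) h.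
lra.
Qed.

Local Open Scope complex_scope.

Lemma intrC (R : rcfType) (z : int) : (z%:~R : R[i]) = (z%:~R : R)%:C.
Proof. by rewrite rmorph_int. Qed.

Lemma ReSum (R : rcfType) (I : Type) (r : seq I) (P : pred I) (f : I -> R[i]) :
  complex.Re (\sum_(i <- r | P i) f i) = \sum_(i <- r | P i) complex.Re (f i).
Proof.
apply: (big_ind2 (fun (a : R[i]) (b : R) => complex.Re a = b)) => //.
by move=> [a1 b1] y1 [a2 b2] y2 /= <- <-.
Qed.
Lemma ImSum (R : rcfType) (I : Type) (r : seq I) (P : pred I) (f : I -> R[i]) :
  complex.Im (\sum_(i <- r | P i) f i) = \sum_(i <- r | P i) complex.Im (f i).
Proof.
apply: (big_ind2 (fun (a : R[i]) (b : R) => complex.Im a = b)) => //.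
by move=> [a1 b1] y1 [a2 b2] y2 /= <- <-.
Qed.

Lemma ReBil (R : rcfType) (u v : 'rV[R[i]]_12) :
  complex.Re (bil u v) = bil (reV u) (reV v) - bil (imV u) (imV v).
Proof.
rewrite !bil_sum -sumrB ReSum; apply: eq_bigr => i _.
rewrite -sumrB ReSum; apply: eq_bigr => j _.
rewrite !mxE intrC; case: (u 0 i) => a b; case: (v 0 j) => c d /=.
ring.
Qed.

Lemma ImBil (R : rcfType) (u v : 'rV[R[i]]_12) :
  complex.Im (bil u v) = bil (reV u) (imV v) + bil (imV u) (reV v).
Proof.
rewrite !bil_sum -big_split ImSum; apply: eq_bigr => i _.
rewrite -big_split ImSum; apply: eq_bigr => j _.
rewrite !mxE intrC; case: (u 0 i) => a b; case: (v 0 j) => c d /=.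
ring.
Qed.

Lemma reV_conj (R : rcfType) (u : 'rV[R[i]]_12) : reV (conjV u) = reV u.
Proof. by apply/matrixP => i j; rewrite !mxE; case: (u i j). Qed.
Lemma imV_conj (R : rcfType) (u : 'rV[R[i]]_12) : imV (conjV u) = - imV u.
Proof. by apply/matrixP => i j; rewrite !mxE; case: (u i j). Qed.

Lemma reV_mul (R : rcfType) n (c : 'rV[R[i]]_n) (M : 'M[int]_(n,12)) :
  reV (c *m map_mx intr M) = map_mx (fun z : R[i] => complex.Re z) c *m map_mx intr M.
Proof.
apply/matrixP => i j; rewrite !mxE ReSum; apply: eq_bigr => k _.
by rewrite !mxE intrC; case: (c i k) => a b /=; rewrite mulr0 subr0.
Qed.
Lemma imV_mul (R : rcfType) n (c : 'rV[R[i]]_n) (M : 'M[int]_(n,12)) :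
  imV (c *m map_mx intr M) = map_mx (fun z : R[i] => complex.Im z) c *m map_mx intr M.
Proof.
apply/matrixP => i j; rewrite !mxE ImSum; apply: eq_bigr => k _.
by rewrite !mxE intrC; case: (c i k) => a b /=; rewrite mulr0 add0r.
Qed.

Lemma reV_int (R : rcfType) (d : 'rV[int]_12) :
  reV (map_mx intr d : 'rV[R[i]]_12) = map_mx intr d.
Proof. by apply/matrixP => i j; rewrite !mxE intrC. Qed.
Lemma imV_int (R : rcfType) (d : 'rV[int]_12) :
  imV (map_mx intr d : 'rV[R[i]]_12) = 0.
Proof. by apply/matrixP => i j; rewrite !mxE intrC. Qed.

Definition mkC {R : rcfType} (X Y : 'rV[R]_12) : 'rV[R[i]]_12 := \row_j (X 0 j +i* Y 0 j).
Lemma reV_mkC (R : rcfType) (X Y : 'rV[R]_12) : reV (mkC X Y) = X.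
Proof. by apply/matrixP => i j; rewrite !mxE (ord1 i). Qed.
Lemma imV_mkC (R : rcfType) (X Y : 'rV[R]_12) : imV (mkC X Y) = Y.
Proof. by apply/matrixP => i j; rewrite !mxE (ord1 i). Qed.

Lemma eqC (R : rcfType) (u v : 'rV[R[i]]_12) : reV u = reV v -> imV u = imV v -> u = v.
Proof.
move=> /matrixP h1 /matrixP h2; apply/matrixP => i j.
move: (h1 i j) (h2 i j); rewrite !mxE.
by case: (u i j) => a b; case: (v i j) => c d /= -> ->.
Qed.

Lemma complex0 (R : rcfType) (z : R[i]) : complex.Re z = 0 -> complex.Im z = 0 -> z = 0.
Proof. by case: z => a b /= -> ->. Qed.


Definition b01 : seq int := [:: 0; 1].
Fixpoint pats (n : nat) : seq (seq int) :=
  if n is n'.+1 then [seq a :: l | a <- b01, l <- pats n'] else [:: [::]].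
Definition congl (n : nat) (r t : seq int) : bool :=
  all (fun k => evz (nth 0 r k - nth 0 t k)) (iota 0 n).

Lemma mem_pats (l : seq int) : all (fun z => z \in b01) l -> l \in pats (size l).
Proof.
elim: l => [|a l IH]; first by [].
rewrite [all _ _]/= => /andP[ha hl].
rewrite (_ : pats (size (a :: l)) = [seq x :: y | x <- b01, y <- pats (size l)]) //.
by apply/allpairsP; exists (a, l); split => //; exact: IH.
Qed.

Lemma evz_mod (z : int) : z = (z %% 2)%Z + 2 * (z %/ 2)%Z /\ (z %% 2)%Z \in b01.
Proof.
split; first by rewrite addrC mulrC -divz_eq.
have h0 : (0 <= (z %% 2)%Z) by exact: modz_ge0.
have h1 : ((z %% 2)%Z < 2) by exact: ltz_pmod.
rewrite !inE; apply/orP; lia.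
Qed.

Lemma lookup n (q : (nat -> int) -> int) (reps : seq (seq int)) (target : int) :
  (forall x y, (forall k, (k < n.+1)%N -> x k = y k) -> q x = q y) ->
  (forall t m, evz (q (fun k => t k + 2 * m k) - q t)) ->
  all (fun t => evz (q (nth 0 t)) || has (fun r => congl n.+1 r t) reps) (pats n.+1) ->
  all (fun r => q (nth 0 r) == target) reps ->
  forall r : 'rV[int]_n.+1, ~~ evz (q (cc r)) ->
  exists rho b : 'rV[int]_n.+1, rho = r + 2 *: b /\ q (cc rho) = target.
Proof.
move=> hext hsh hcheck hreps r hodd.
pose tf k := (cc r k %% 2)%Z; pose mq k := (cc r k %/ 2)%Z.
pose tl := mkseq tf n.+1.
have htl : forall k, (k < n.+1)%N -> nth 0 tl k = tf k by move=> k hk; rewrite nth_mkseq.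
have e1 : q (cc r) = q (fun k => nth 0 tl k + 2 * mq k).
  by apply: hext => k hk; rewrite htl //; case: (evz_mod (cc r k)).
have hodd' : ~~ evz (q (nth 0 tl)).
  apply: contra hodd => he.
  have := hsh (nth 0 tl) mq; rewrite -e1 => hd.
  by rewrite -(subrK (q (nth 0 tl)) (q (cc r))) /evz rpredD.
have mem : tl \in pats n.+1.
  have -> : n.+1 = size tl by rewrite size_mkseq.
  apply: mem_pats; apply/allP => z /mapP[k _ ->].
  by case: (evz_mod (cc r k)).
have := allP hcheck tl mem; rewrite (negbTE hodd') /= => /hasP[rl hrl hcong].
pose rho := \row_(k < n.+1) nth 0 rl k.
have hrho : forall k, (k < n.+1)%N -> cc rho k = nth 0 rl k.
  by move=> k hk; rewrite /cc mxE inordK.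
have hb : forall k : 'I_n.+1, exists bk : int, rho 0 k = r 0 k + 2 * bk.
  move=> k.
  have /allP/(_ k) := hcong; rewrite mem_iota add0n ltn_ord => /(_ isT).
  rewrite htl // => /dvdzP[qq hqq].
  exists (qq - mq k); rewrite mxE.
  have -> : nth 0 rl k = qq * 2 + tf k by rewrite -hqq subrK.
  have -> : r 0 k = cc r k by rewrite /cc inord_val.
  by case: (evz_mod (cc r k)) => {2}-> _; rewrite /tf; ring.
have [bf hbf] := fin_all_exists hb.
exists rho, (\row_k bf k); split.
  by apply/matrixP => i j; rewrite (ord1 i) hbf !mxE.
by rewrite (hext _ (nth 0 rl)) //; exact/eqP/(allP hreps).
Qed.

Definition bE8f {F : pzRingType} (x y : nat -> F) : F :=
  2 * (x 0%N * y 0%N + x 1%N * y 1%N + x 2%N * y 2%N + x 3%N * y 3%N + x 4%N * y 4%N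
  + x 5%N * y 5%N + x 6%N * y 6%N + x 7%N * y 7%N)
  - (x 0%N * y 2%N + x 2%N * y 3%N + x 3%N * y 4%N + x 4%N * y 5%N + x 5%N * y 6%N
     + x 6%N * y 7%N + x 1%N * y 3%N)
  - (y 0%N * x 2%N + y 2%N * x 3%N + y 3%N * x 4%N + y 4%N * x 5%N + y 5%N * x 6%N
     + y 6%N * x 7%N + y 1%N * x 3%N).

Lemma qE8_ext (F : pzRingType) (x y : nat -> F) : (forall k, (k < 8)%N -> x k = y k) -> qE8f x = qE8f y.
Proof. by move=> h; rewrite /qE8f !h. Qed.

Lemma qE8_shift (t m : nat -> int) : evz (qE8f (fun k => t k + 2 * m k) - qE8f t).
Proof. by apply/dvdzP; exists (bE8f t m + 2 * qE8f m); rewrite /qE8f /bE8f; ring. Qed.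
Definition e8roots : seq (seq int) := [:: [:: 0; 0; 0; 0; 0; 0; 0; 1]; [:: 0; 0; 0; 0; 0; 0; 1; 0]; [:: 0; 0; 0; 0; 0; 0; 1; 1]; [:: 0; 0; 0; 0; 0; 1; 0; 0]; [:: 0; 0; 0; 0; 0; 1; 1; 0]; [:: 0; 0; 0; 0; 0; 1; 1; 1]; [:: 0; 0; 0; 0; 1; 0; 0; 0]; [:: 0; 0; 0; 0; 1; 1; 0; 0]; [:: 0; 0; 0; 0; 1; 1; 1; 0]; [:: 0; 0; 0; 0; 1; 1; 1; 1]; [:: 0; 0; 0; 1; 0; 0; 0; 0]; [:: 0; 0; 0; 1; 1; 0; 0; 0]; [:: 0; 0; 0; 1; 1; 1; 0; 0]; [:: 0; 0; 0; 1; 1; 1; 1; 0]; [:: 0; 0; 0; 1; 1; 1; 1; 1]; [:: 0; 0; 1; 0; 0; 0; 0; 0]; [:: 0; 0; 1; 1; 0; 0; 0; 0]; [:: 0; 0; 1; 1; 1; 0; 0; 0]; [:: 0; 0; 1; 1; 1; 1; 0; 0]; [:: 0; 0; 1; 1; 1; 1; 1; 0]; [:: 0; 0; 1; 1; 1; 1; 1; 1]; [:: 0; 1; 0; 0; 0; 0; 0; 0]; [:: 0; 1; 0; 1; 0; 0; 0; 0]; [:: 0; 1; 0; 1; 1; 0; 0; 0]; [:: 0; 1; 0; 1; 1; 1; 0; 0]; [:: 0; 1; 0; 1; 1; 1; 1; 0]; [:: 0; 1; 0; 1; 1; 1; 1; 1]; [:: 0; 1; 1; 1; 0; 0; 0;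 0]; [:: 0; 1; 1; 1; 1; 0; 0; 0]; [:: 0; 1; 1; 1; 1; 1; 0; 0]; [:: 0; 1; 1; 1; 1; 1; 1; 0]; [:: 0; 1; 1; 1; 1; 1; 1; 1]; [:: 0; 1; 1; 2; 1; 0; 0; 0]; [:: 0; 1; 1; 2; 1; 1; 0; 0]; [:: 0; 1; 1; 2; 1; 1; 1; 0]; [:: 0; 1; 1; 2; 1; 1; 1; 1]; [:: 0; 1; 1; 2; 2; 1; 0; 0]; [:: 0; 1; 1; 2; 2; 1; 1; 0]; [:: 0; 1; 1; 2; 2; 1; 1; 1]; [:: 0; 1; 1; 2; 2; 2; 1; 0]; [:: 0; 1; 1; 2; 2; 2; 1; 1]; [:: 0; 1; 1; 2; 2; 2; 2; 1]; [:: 1; 0; 0; 0; 0; 0; 0; 0]; [:: 1; 0; 1; 0; 0; 0; 0; 0]; [:: 1; 0; 1; 1; 0; 0; 0; 0]; [:: 1; 0; 1; 1; 1; 0; 0; 0]; [:: 1; 0; 1; 1; 1; 1; 0; 0]; [:: 1; 0; 1; 1; 1; 1; 1; 0]; [:: 1; 0; 1; 1; 1; 1; 1; 1]; [:: 1; 1; 1; 1; 0; 0; 0; 0]; [:: 1; 1; 1; 1; 1; 0; 0; 0]; [:: 1; 1; 1; 1; 1; 1; 0; 0]; [:: 1; 1; 1; 1; 1; 1; 1; 0]; [:: 1; 1; 1; 1; 1; 1; 1; 1]; [:: 1; 1; 1; 2; 1; 0; 0; 0]; [:: 1; 1; 1; 2; 1; 1; 0; 0]; [:: 1; 1; 1;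 2; 1; 1; 1; 0]; [:: 1; 1; 1; 2; 1; 1; 1; 1]; [:: 1; 1; 1; 2; 2; 1; 0; 0]; [:: 1; 1; 1; 2; 2; 1; 1; 0]; [:: 1; 1; 1; 2; 2; 1; 1; 1]; [:: 1; 1; 1; 2; 2; 2; 1; 0]; [:: 1; 1; 1; 2; 2; 2; 1; 1]; [:: 1; 1; 1; 2; 2; 2; 2; 1]; [:: 1; 1; 2; 2; 1; 0; 0; 0]; [:: 1; 1; 2; 2; 1; 1; 0; 0]; [:: 1; 1; 2; 2; 1; 1; 1; 0]; [:: 1; 1; 2; 2; 1; 1; 1; 1]; [:: 1; 1; 2; 2; 2; 1; 0; 0]; [:: 1; 1; 2; 2; 2; 1; 1; 0]; [:: 1; 1; 2; 2; 2; 1; 1; 1]; [:: 1; 1; 2; 2; 2; 2; 1; 0]; [:: 1; 1; 2; 2; 2; 2; 1; 1]; [:: 1; 1; 2; 2; 2; 2; 2; 1]; [:: 1; 1; 2; 3; 2; 1; 0; 0]; [:: 1; 1; 2; 3; 2; 1; 1; 0]; [:: 1; 1; 2; 3; 2; 1; 1; 1]; [:: 1; 1; 2; 3; 2; 2; 1; 0]; [:: 1; 1; 2; 3; 2; 2; 1; 1]; [:: 1; 1; 2; 3; 2; 2; 2; 1]; [:: 1; 1; 2; 3; 3; 2; 1; 0]; [:: 1; 1; 2; 3; 3; 2; 1; 1]; [:: 1; 1; 2; 3; 3; 2; 2; 1]; [:: 1; 1; 2; 3; 3; 3; 2; 1]; [:: 1; 2; 2; 3; 2; 1; 0; 0]; [::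 1; 2; 2; 3; 2; 1; 1; 0]; [:: 1; 2; 2; 3; 2; 1; 1; 1]; [:: 1; 2; 2; 3; 2; 2; 1; 0]; [:: 1; 2; 2; 3; 2; 2; 1; 1]; [:: 1; 2; 2; 3; 2; 2; 2; 1]; [:: 1; 2; 2; 3; 3; 2; 1; 0]; [:: 1; 2; 2; 3; 3; 2; 1; 1]; [:: 1; 2; 2; 3; 3; 2; 2; 1]; [:: 1; 2; 2; 3; 3; 3; 2; 1]; [:: 1; 2; 2; 4; 3; 2; 1; 0]; [:: 1; 2; 2; 4; 3; 2; 1; 1]; [:: 1; 2; 2; 4; 3; 2; 2; 1]; [:: 1; 2; 2; 4; 3; 3; 2; 1]; [:: 1; 2; 2; 4; 4; 3; 2; 1]; [:: 1; 2; 3; 4; 3; 2; 1; 0]; [:: 1; 2; 3; 4; 3; 2; 1; 1]; [:: 1; 2; 3; 4; 3; 2; 2; 1]; [:: 1; 2; 3; 4; 3; 3; 2; 1]; [:: 1; 2; 3; 4; 4; 3; 2; 1]; [:: 1; 2; 3; 5; 4; 3; 2; 1]; [:: 1; 3; 3; 5; 4; 3; 2; 1]; [:: 2; 2; 3; 4; 3; 2; 1; 0]; [:: 2; 2; 3; 4; 3; 2; 1; 1]; [:: 2; 2; 3; 4; 3; 2; 2; 1]; [:: 2; 2; 3; 4; 3; 3; 2; 1]; [:: 2; 2; 3; 4; 4; 3; 2; 1]; [:: 2; 2; 3; 5; 4; 3; 2; 1]; [:: 2; 2; 4; 5; 4; 3; 2; 1]; [:: 2; 3; 3; 5; 4; 3;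 2; 1]; [:: 2; 3; 4; 5; 4; 3; 2; 1]; [:: 2; 3; 4; 6; 4; 3; 2; 1]; [:: 2; 3; 4; 6; 5; 3; 2; 1]; [:: 2; 3; 4; 6; 5; 4; 2; 1]; [:: 2; 3; 4; 6; 5; 4; 3; 1]; [:: 2; 3; 4; 6; 5; 4; 3; 2]].
Lemma check8 : all (fun t => evz (qE8f (nth 0 t)) || has (fun r => congl 8 r t) e8roots) (pats 8).
Proof. by vm_compute. Qed.
Lemma roots8 : all (fun r => qE8f (nth 0 r) == 1) e8roots.
Proof. by vm_compute. Qed.

Lemma e8_lookup (r : 'rV[int]_8) : ~~ evz (qE8f (cc r)) ->
  exists rho b : 'rV[int]_8, rho = r + 2 *: b /\ qE8f (cc rho) = 1.
Proof. exact: (@lookup 7 qE8f e8roots 1 (@qE8_ext _) qE8_shift check8 roots8). Qed.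

Definition q4 {F : pzRingType} (x : nat -> F) : F := x 0%N * x 1%N + x 2%N * x 3%N.
Lemma q4_ext (F : pzRingType) (x y : nat -> F) : (forall k, (k < 4)%N -> x k = y k) -> q4 x = q4 y.
Proof. by move=> h; rewrite /q4 !h. Qed.
Lemma q4_shift (t m : nat -> int) : evz (q4 (fun k => t k + 2 * m k) - q4 t).
Proof.
apply/dvdzP; exists (t 0%N * m 1%N + m 0%N * t 1%N + 2 * m 0%N * m 1%N
  + t 2%N * m 3%N + m 2%N * t 3%N + 2 * m 2%N * m 3%N); rewrite /q4; ring.
Qed.
Definition k4reps : seq (seq int) :=
  [:: [:: 1; -1; 0; 0]; [:: 1; -1; 1; 0]; [:: 1; -1; 0; 1]; [:: 0; 0; 1; -1];
      [:: 1; 0; 1; -1]; [:: 0; 1; 1; -1]].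
Lemma check4 : all (fun t => evz (q4 (nth 0 t)) || has (fun r => congl 4 r t) k4reps) (pats 4).
Proof. by vm_compute. Qed.
Lemma reps4 : all (fun r => q4 (nth 0 r) == -1) k4reps.
Proof. by vm_compute. Qed.
Lemma k4_lookup (s : 'rV[int]_4) : ~~ evz (q4 (cc s)) ->
  exists sig b : 'rV[int]_4, sig = s + 2 *: b /\ q4 (cc sig) = -1.
Proof. exact: (@lookup 3 q4 k4reps (-1) (@q4_ext _) q4_shift check4 reps4). Qed.

Local Open Scope complex_scope.

Lemma mapZ (F : pzRingType) m n (c : int) (v : 'M[int]_(m,n)) :
  map_mx intr (c *: v) = c%:~R *: (map_mx intr v : 'M[F]_(m,n)).
Proof. by apply/matrixP => i j; rewrite !mxE intrM. Qed.
Lemma mapD (F : pzRingType) m n (u v : 'M[int]_(m,n)) :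
  map_mx intr (u + v) = (map_mx intr u + map_mx intr v : 'M[F]_(m,n)).
Proof. by apply/matrixP => i j; rewrite !mxE intrD. Qed.
Lemma mapN (F : pzRingType) m n (u : 'M[int]_(m,n)) :
  map_mx intr (- u) = - (map_mx intr u : 'M[F]_(m,n)).
Proof. by apply/matrixP => i j; rewrite !mxE intrN. Qed.
Lemma mapz m n (M : 'M[int]_(m,n)) : map_mx intr M = M.
Proof. by apply/matrixP => i j; rewrite mxE intz. Qed.
Lemma cc_map (F : pzRingType) n (u : 'rV[int]_n.+1) k : cc (map_mx intr u : 'rV[F]_n.+1) k = (cc u k)%:~R.
Proof. by rewrite /cc mxE. Qed.

Lemma QKE (F : comNzRingType) (B : 'M[int]_(4,12)) (C : 'M[int]_(8,12)) (x : 'rV[F]_4) (y : 'rV[F]_8) :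
  K_basis B -> E_basis_perp B C ->
  bil (x *m map_mx intr B + y *m map_mx intr C) (x *m map_mx intr B + y *m map_mx intr C)
  = 4 * q4 (cc x) - 4 * qE8f (cc y).
Proof.
move=> hK hE.
rewrite bilDl !bilDr (formBB _ _ hK) (formBC _ _ hE) (bilC (y *m _)) (formBC _ _ hE) (formCC _ hE).
rewrite /b4 /q4; ring.
Qed.

Lemma BKE (F : comNzRingType) (B : 'M[int]_(4,12)) (C : 'M[int]_(8,12)) (x' x : 'rV[F]_4) (y : 'rV[F]_8) :
  K_basis B -> E_basis_perp B C ->
  bil (x' *m map_mx intr B) (x *m map_mx intr B + y *m map_mx intr C) = 2 * b4 (cc x') (cc x).
Proof. by move=> hK hE; rewrite bilDr (formBB _ _ hK) (formBC _ _ hE) addr0. Qed.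

Lemma QKEz (B : 'M[int]_(4,12)) (C : 'M[int]_(8,12)) (x : 'rV[int]_4) (y : 'rV[int]_8) :
  K_basis B -> E_basis_perp B C ->
  bil (x *m B + y *m C) (x *m B + y *m C) = 4 * q4 (cc x) - 4 * qE8f (cc y).
Proof. by move=> hK hE; rewrite -(mapz B) -(mapz C) QKE. Qed.

Lemma BKEz (B : 'M[int]_(4,12)) (C : 'M[int]_(8,12)) (x' x : 'rV[int]_4) (y : 'rV[int]_8) :
  K_basis B -> E_basis_perp B C ->
  bil (x' *m B) (x *m B + y *m C) = 2 * b4 (cc x') (cc x).
Proof. by move=> hK hE; rewrite -(mapz B) -(mapz C) BKE. Qed.

Lemma build (R : rcfType) (p1 p2 : 'rV[R]_12) (B : 'M[int]_(4,12)) (xK yK : 'rV[int]_4)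
   (v : 'rV[int]_12) :
  let X : 'rV[R]_12 := map_mx intr (xK *m B) in
  let Y : 'rV[R]_12 := map_mx intr (yK *m B) in
  bil X X = bil Y Y -> 0 < bil X X -> bil X Y = 0 ->
  bil X (map_mx intr v) = 0 -> bil Y (map_mx intr v) = 0 -> bil v v = - 2 ->
  0 < bil X p1 * bil Y p2 - bil X p2 * bil Y p1 ->
  exists w : 'rV[R[i]]_12, [/\ OmegaPlus p1 p2 w, inKC B w & inHcal w].
Proof.
move=> X Y hXY hX hO hXv hYv hv hD.
exists (mkC X Y); split.
- split.
  + apply: complex0; first by rewrite ReBil reV_mkC imV_mkC hXY subrr.
    by rewrite ImBil reV_mkC imV_mkC (bilC Y X) hO addr0.
  + rewrite ltcE ReBil ImBil reV_conj imV_conj !reV_mkC !imV_mkC /=.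
    rewrite bilNr (bilC Y X) hO oppr0 add0r eqxx /= bilNr opprK.
    by apply: addr_gt0; [exact: hX | rewrite -hXY].
  + by rewrite reV_mkC imV_mkC.
- exists (\row_k ((xK 0 k)%:~R +i* (yK 0 k)%:~R)).
  apply: eqC.
    rewrite reV_mkC reV_mul /X map_mxM; congr (_ *m _).
    by apply/matrixP => i j; rewrite !mxE (ord1 i).
  rewrite imV_mkC imV_mul /Y map_mxM; congr (_ *m _).
  by apply/matrixP => i j; rewrite !mxE (ord1 i).
- exists v; split => //.
  apply: complex0.
    by rewrite ReBil reV_mkC imV_mkC reV_int imV_int bil0r hXv subrr.
  by rewrite ImBil reV_mkC imV_mkC reV_int imV_int bil0r hYv add0r.
Qed.

Local Open Scope complex_scope.

Lemma ccrow (l : seq int) k : (k < 4)%N -> cc (\row_(j < 4) nth 0 l j) k = nth 0 l k.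
Proof. by move=> hk; rewrite /cc mxE inordK. Qed.

Lemma formBBz (B : 'M[int]_(4,12)) (x y : 'rV[int]_4) :
  K_basis B -> bil (x *m B) (y *m B) = 2 * b4 (cc x) (cc y).
Proof. by move=> hK; rewrite -(mapz B) formBB. Qed.

Lemma d1_norm (B : 'M[int]_(4,12)) (d1 : 'rV[rat]_12) (s : 'rV[int]_4) (t1 : 'rV[rat]_4) :
  K_basis B -> d1 = t1 *m map_mx intr B -> ratv s = 2 *: t1 ->
  bil d1 d1 = (q4 (cc s))%:~R.
Proof.
move=> hK d1E hs.
have h2 : 2 *: d1 = ratv (s *m B) by rewrite d1E ratvM hs scalemxAl.
have h4 : bil (2 *: d1) (2 *: d1) = 4 * bil d1 d1 by rewrite bilZl bilZr mulrA -natrM.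
have : bil (ratv (s *m B)) (ratv (s *m B)) = (4 * q4 (cc s))%:~R.
  by rewrite /ratv bil_map formBBz // /b4 /q4; congr (_%:~R); ring.
rewrite -h2 h4 intrM => e.
apply: (@mulfI _ 4) => //; rewrite e; congr (_ * _).
Qed.

Lemma odd2k1 (k : int) : ~~ evz (2 * k + 1).
Proof. by apply/negP => /dvdzP[q hq]; lia. Qed.

Lemma bil_even (v : 'rV[int]_12) : evz (bil v v).
Proof.
apply/dvdzP; exists (2 * (cc v 0 * cc v 1) + cc v 2 * cc v 3 - 2 * qE8f (fun k => cc v (k + 4))).
rewrite bilQ; ring.
Qed.

Lemma bil2 (F : comNzRingType) (u : 'rV[F]_12) : bil (2 *: u) (2 *: u) = 4 * bil u u.
Proof. by rewrite bilZl bilZr mulrA -natrM. Qed.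

Lemma part1 (R : rcfType) (p1 p2 : 'rV[R]_12)
    (B : 'M[int]_(4, 12)) (C : 'M[int]_(8, 12)) (d1 d2 : 'rV[rat]_12) :
  pos_plane p1 p2 -> patching_data B C d1 d2 -> qmod2 (bil d1 d1) 1 ->
  exists w : 'rV[R[i]]_12, [/\ OmegaPlus p1 p2 w, inKC B w & inHcal w].
Proof.
move=> [hA hD] [hK hE hd1 hd2 [hgl1 hgl2]] [k hk].
have [s [t1 [d1E hs _]]] := K_dual hK hd1.
have [r [t2 [d2E hr _]]] := E_dual hE hd2.
have hq4 : q4 (cc s) = 2 * k + 1.
  by apply: (@intr_inj rat); rewrite -(d1_norm hK d1E hs) hk.
have [v0 hv0] := hgl2 1 0 0.
have h2v0 := two_glue d1E hs d2E hr hv0.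
rewrite !scale1r !scaler0 !addr0 in h2v0.
have hnv0 : 4 * bil v0 v0 = 4 * q4 (cc s) - 4 * qE8f (cc r).
  by rewrite -(QKEz _ _ hK hE) -h2v0 bil2.
have hodd : ~~ evz (qE8f (cc r)).
  apply/negP => /dvdzP[f hf].
  move: (bil_even v0) => /dvdzP[e he].
  lia.
have [rho [b [hrho hrq]]] := e8_lookup hodd.
have [sig [a [hsig hsq]]] := k4_lookup (eq_ind_r (fun z => ~~ evz z) (odd2k1 k) hq4).
have [v hv] := hgl2 1 a b.
have h2v := two_glue d1E hs d2E hr hv.
rewrite !scale1r -hsig -hrho in h2v.
have hvv : bil v v = - 2.
  have : 4 * bil v v = 4 * q4 (cc sig) - 4 * qE8f (cc rho).
    by rewrite -(QKEz _ _ hK hE) -h2v bil2.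
  rewrite hsq hrq; lia.
pose xK := \row_(j < 4) nth 0 [:: cc sig 0; - cc sig 1; - cc sig 2; cc sig 3] j.
pose yK := \row_(j < 4) nth 0 [:: cc sig 2; - cc sig 3; cc sig 0; - cc sig 1] j.
have cx : forall j, (j < 4)%N -> cc xK j = nth 0 [:: cc sig 0; - cc sig 1; - cc sig 2; cc sig 3] j.
  exact: ccrow.
have cy : forall j, (j < 4)%N -> cc yK j = nth 0 [:: cc sig 2; - cc sig 3; cc sig 0; - cc sig 1] j.
  exact: ccrow.
move: hsq; rewrite /q4 => hsq.
have iXX : bil (xK *m B) (xK *m B) = 4.
  rewrite formBBz // /b4 !cx //=; lia.
have iYY : bil (yK *m B) (yK *m B) = 4.
  rewrite formBBz // /b4 !cy //=; lia.
have iXY : bil (xK *m B) (yK *m B) = 0.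
  rewrite formBBz // /b4 !cx // !cy //=; lia.
have iXv : bil (xK *m B) v = 0.
  have : 2 * bil (xK *m B) v = 0.
    by rewrite -bilZr h2v (BKEz _ _ _ hK hE) /b4 !cx //=; lia.
  lia.
have iYv : bil (yK *m B) v = 0.
  have : 2 * bil (yK *m B) v = 0.
    by rewrite -bilZr h2v (BKEz _ _ _ hK hE) /b4 !cy //=; lia.
  lia.
pose X : 'rV[R]_12 := map_mx intr (xK *m B).
pose Y : 'rV[R]_12 := map_mx intr (yK *m B).
pose vR : 'rV[R]_12 := map_mx intr v.
have rXX : bil X X = 4 by rewrite /X bil_map iXX.
have rYY : bil Y Y = 4 by rewrite /Y bil_map iYY.
have rXY : bil X Y = 0 by rewrite /X /Y bil_map iXY.
have rXv : bil X vR = 0 by rewrite /X /vR bil_map iXv.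
have rYv : bil Y vR = 0 by rewrite /Y /vR bil_map iYv.
have hXpos : 0 < bil X X by rewrite rXX ltr0n.
have hXYe : bil X X = bil Y Y by rewrite rXX rYY.
have hDnz := orient_nz hA hD hXYe hXpos rXY.
have hvv' : bil v v = - 2 := hvv.
move: hDnz; rewrite neq_lt => /orP[hsign|hsign]; last first.
  exact: (@build R p1 p2 B xK yK v hXYe hXpos rXY rXv rYv hvv hsign).
have hY' : map_mx intr ((- yK) *m B) = - Y :> 'rV[R]_12 by rewrite mulNmx mapN.
have := @build R p1 p2 B xK (- yK) v; rewrite /= hY' -/X -/vR !bilNl !bilNr opprK rXY rYv oppr0.
move=> /(_ hXYe hXpos erefl rXv erefl hvv); apply; lra.
Qed.

Local Open Scope complex_scope.

Lemma qE8_posz (x : nat -> int) : qE8f x <= 0 -> forall k, (k < 8)%N -> x k = 0.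
Proof.
move=> hq.
have h := qE8_sos x.
move: (sqr_ge0 (2 * x 0%N - x 2%N)) (sqr_ge0 (2 * x 1%N - x 3%N))
      (sqr_ge0 (3 * x 2%N - 2 * x 3%N)) (sqr_ge0 (5 * x 3%N - 6 * x 4%N))
      (sqr_ge0 (4 * x 4%N - 5 * x 5%N)) (sqr_ge0 (3 * x 5%N - 4 * x 6%N))
      (sqr_ge0 (2 * x 6%N - 3 * x 7%N)) (sqr_ge0 (x 7%N)) h.
move: (sq0 (x := 2 * x 0%N - x 2%N)) (sq0 (x := 2 * x 1%N - x 3%N))
      (sq0 (x := 3 * x 2%N - 2 * x 3%N)) (sq0 (x := 5 * x 3%N - 6 * x 4%N))
      (sq0 (x := 4 * x 4%N - 5 * x 5%N)) (sq0 (x := 3 * x 5%N - 4 * x 6%N))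
      (sq0 (x := 2 * x 6%N - 3 * x 7%N)) (sq0 (x := x 7%N)).
move: (qE8f x) hq.
move: ((2 * x 0%N - x 2%N) ^+ 2) ((2 * x 1%N - x 3%N) ^+ 2)
      ((3 * x 2%N - 2 * x 3%N) ^+ 2) ((5 * x 3%N - 6 * x 4%N) ^+ 2)
      ((4 * x 4%N - 5 * x 5%N) ^+ 2) ((3 * x 5%N - 4 * x 6%N) ^+ 2)
      ((2 * x 6%N - 3 * x 7%N) ^+ 2) (x 7%N ^+ 2).
move=> S0 S1 S2 S3 S4 S5 S6 S7 Q hq e0 e1 e2 e3 e4 e5 e6 e7 s0 s1 s2 s3 s4 s5 s6 s7 h.
have z0 := e0 ltac:(lia). have z1 := e1 ltac:(lia). have z2 := e2 ltac:(lia).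
have z3 := e3 ltac:(lia). have z4 := e4 ltac:(lia). have z5 := e5 ltac:(lia).
have z6 := e6 ltac:(lia). have z7 := e7 ltac:(lia).
move=> k hk.
do 8? [case: k hk => [|k] hk; first lia].
by [].
Qed.

Lemma part2 (R : rcfType) (p1 p2 : 'rV[R]_12)
    (B : 'M[int]_(4, 12)) (C : 'M[int]_(8, 12)) (d1 d2 : 'rV[rat]_12) :
  patching_data B C d1 d2 -> qmod2 (bil d1 d1) 0 ->
  ~ exists w : 'rV[R[i]]_12, [/\ OmegaPlus p1 p2 w, inKC B w & inHcal w].
Proof.
move=> [hK hE hd1 hd2 [hgl1 hgl2]] [k hk] [w [[hww hwc _] [c hc] [d [hdd hdw]]]].
have [s [t1 [d1E hs [k1 hk1]]]] := K_dual hK hd1.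
have [r [t2 [d2E hr [k2 hk2]]]] := E_dual hE hd2.
have hq4 : q4 (cc s) = 2 * k + 0.
  by apply: (@intr_inj rat); rewrite -(d1_norm hK d1E hs) hk.
have [n [a [b hv]]] := hgl1 d.
have h2d := two_glue d1E hs d2E hr hv.
move: h2d; set sig := n *: s + 2 *: a; set rho := n *: r + 2 *: b => h2d.
have hnorm : q4 (cc sig) - qE8f (cc rho) = - 2.
  have : 4 * bil d d = 4 * q4 (cc sig) - 4 * qE8f (cc rho).
    by rewrite -(QKEz _ _ hK hE) -h2d bil2.
  rewrite hdd; lia.
have csig : forall j, cc sig j = n * cc s j + 2 * cc a j by move=> j; rewrite /cc !mxE.
have crho : forall j, cc rho j = n * cc r j + 2 * cc b j by move=> j; rewrite /cc !mxE.
have [hn hn01] := evz_mod n.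
set m := (n %/ 2)%Z in hn.
have : (n %% 2)%Z = 0 \/ (n %% 2)%Z = 1 by move: hn01; rewrite !inE => /orP[/eqP->|/eqP->]; [left|right].
case=> hn2; rewrite hn2 in hn.
-
  have e1 : q4 (cc sig) = 4 * q4 (fun j => m * cc s j + cc a j).
    rewrite (q4_ext (y := fun j => 2 * (m * cc s j + cc a j))); last by move=> j _; rewrite csig hn; ring.
    rewrite /q4; ring.
  have e2 : qE8f (cc rho) = 4 * qE8f (fun j => m * cc r j + cc b j).
    rewrite (qE8_ext (y := fun j => 2 * (m * cc r j + cc b j))); last by move=> j _; rewrite crho hn; ring.
    rewrite /qE8f; ring.
  rewrite e1 e2 in hnorm; lia.
have hsig_even : evz (q4 (cc sig)).
  have := q4_shift (cc s) (fun j => m * cc s j + cc a j).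
  rewrite -(q4_ext (x := cc sig)); last by move=> j _; rewrite csig hn; ring.
  move=> /dvdzP[f hf]; apply/dvdzP; exists (f + k); lia.
have hrho0 : cc rho k2 != 0.
  apply/negP => /eqP h0; apply: (negP hk2).
  have -> : r 0 k2 = cc r k2 by rewrite /cc inord_val.
  apply/dvdzP; exists (- (m * cc r k2 + cc b k2)).
  move: h0; rewrite crho hn; lia.
have hqpos : 0 < qE8f (cc rho).
  rewrite ltNge; apply/negP => hle.
  by move: hrho0; rewrite (qE8_posz hle (ltn_ord k2)) eqxx.
have hsig_ge0 : 0 <= q4 (cc sig).
  move: hsig_even => /dvdzP[f hf]; lia.
pose X := reV w; pose Y := imV w.
pose cr := map_mx (fun z : R[i] => complex.Re z) c.
pose ci := map_mx (fun z : R[i] => complex.Im z) c.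
have hX : X = cr *m map_mx intr B by rewrite /X hc reV_mul.
have hY : Y = ci *m map_mx intr B by rewrite /Y hc imV_mul.
have e_ww1 : bil X X - bil Y Y = 0 by rewrite -ReBil hww.
have e_ww2 : bil X Y + bil Y X = 0 by rewrite -ImBil hww.
have e_wc : 0 < bil X X + bil Y Y.
  move: hwc; rewrite ltcE ReBil reV_conj imV_conj bilNr opprK => /andP[_ ->] //.
pose dR : 'rV[R]_12 := map_mx intr d.
have e_d1 : bil X dR = 0.
  by move: (congr1 (@complex.Re R) hdw); rewrite ReBil reV_int imV_int bil0r subr0.
have e_d2 : bil Y dR = 0.
  by move: (congr1 (@complex.Im R) hdw); rewrite ImBil reV_int imV_int bil0r add0r.
pose sR : 'rV[R]_4 := map_mx intr sig.
pose rR : 'rV[R]_8 := map_mx intr rho.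
have h2dR : 2 *: dR = sR *m map_mx intr B + rR *m map_mx intr C.
  by rewrite /dR /sR /rR -[2 *: _](@mapZ R _ _ 2 d) h2d mapD !map_mxM.
have bx : b4 (cc cr) (cc sR) = 0.
  have : bil X (2 *: dR) = 0 by rewrite bilZr e_d1 mulr0.
  rewrite h2dR hX (BKE _ _ _ hK hE) => /eqP; rewrite mulf_eq0 => /orP[|/eqP//].
  by rewrite pnatr_eq0.
have byk : b4 (cc ci) (cc sR) = 0.
  have : bil Y (2 *: dR) = 0 by rewrite bilZr e_d2 mulr0.
  rewrite h2dR hY (BKE _ _ _ hK hE) => /eqP; rewrite mulf_eq0 => /orP[|/eqP//].
  by rewrite pnatr_eq0.
have fXX : bil X X = 2 * b4 (cc cr) (cc cr) by rewrite hX (formBB _ _ hK).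
have fYY : bil Y Y = 2 * b4 (cc ci) (cc ci) by rewrite hY (formBB _ _ hK).
have fXY : bil X Y = 2 * b4 (cc cr) (cc ci) by rewrite hX hY (formBB _ _ hK).
rewrite (bilC Y X) in e_ww2.
have hk4 : 0 <= cc sR 0 * cc sR 1 + cc sR 2 * cc sR 3.
  by rewrite !cc_map -!intrM -intrD ler0z.
have qX : bil X X = 4 * (cc cr 0 * cc cr 1 + cc cr 2 * cc cr 3) by rewrite fXX /b4; ring.
have qY : bil Y Y = 4 * (cc ci 0 * cc ci 1 + cc ci 2 * cc ci 3) by rewrite fYY /b4; ring.
have hxx : cc cr 0 * cc cr 1 + cc cr 2 * cc cr 3 = cc ci 0 * cc ci 1 + cc ci 2 * cc ci 3.
  apply: (@mulfI _ 4); first by rewrite pnatr_eq0.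
  by rewrite -qX -qY; apply/eqP; rewrite -subr_eq0 e_ww1.
have hxy : b4 (cc cr) (cc ci) = 0.
  have : 2 * b4 (cc cr) (cc ci) = 0 by rewrite -fXY; lra.
  by move/eqP; rewrite mulf_eq0 pnatr_eq0 /= => /eqP.
have hpos : 0 < cc cr 0 * cc cr 1 + cc cr 2 * cc cr 3.
  move: qX qY e_ww1 e_wc; move: (cc cr 0 * cc cr 1 + cc cr 2 * cc cr 3) => A.
  move: (bil X X) (bil Y Y) => bx' by' qX qY h1 h2; lra.
move: hxy bx byk; rewrite /b4 => hxy bx byk.
have [z0 z1 z2 z3] := K4 hxx hxy hpos bx byk hk4.
have hz : forall j, (j < 4)%N -> cc sig j = 0.
  move=> j hj; apply/eqP; rewrite -(intr_eq0 R) -cc_map.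
  by case: j hj => [|[|[|[|j]]]] //= _; apply/eqP.
apply: (negP hk1).
have -> : s 0 k1 = cc s k1 by rewrite /cc inord_val.
apply/dvdzP; exists (- (m * cc s k1 + cc a k1)).
move: (hz k1 (ltn_ord k1)); rewrite csig hn; lia.
Qed.

Local Close Scope complex_scope.

Theorem proposition3p13 (R : rcfType) (p1 p2 : 'rV[R]_12)
    (B : 'M[int]_(4, 12)) (C : 'M[int]_(8, 12)) (d1 d2 : 'rV[rat]_12) :
  pos_plane p1 p2 ->
  patching_data B C d1 d2 ->
  (* (1) odd type: q_K(gamma) = 1 in Z/2 *)
  (qmod2 (bil d1 d1) 1 ->
     exists w : 'rV[R[i]]_12, [/\ OmegaPlus p1 p2 w, inKC B w & inHcal w]) /\
  (* (2) even type: q_K(gamma) = 0 in Z/2 *)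
  (qmod2 (bil d1 d1) 0 ->
     ~ exists w : 'rV[R[i]]_12, [/\ OmegaPlus p1 p2 w, inKC B w & inHcal w]).
Proof.
move=> hpos hpd; split => hq.
  exact: part1 hpos hpd hq.
exact: part2 hpd hq.
Qed.
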